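(* Let $x,y\in\mathcal{Q}^\pi$. Then $(q_n^{(x+y)})$ converges in $(\mathcal D,d)$ if and only if $(q_n^{(x,y)})$ converges in $(\mathcal D,d)$. In this case $x+y\in\mathcal Q^\pi$ and $\lim_n q_n^{(x,y)}=\tfrac12\big([x+y]_\pi-[x]_\pi-[y]_\pi\big)$.
   Context: Let $\pi=(\pi_n)_{n\ge1}$ be a sequence of partitions $\pi_n=(t^n_0,\dots,t^n_{k_n})$ with $0=t^n_0<\dots<t^n_{k_n}<\infty$, $t^n_{k_n}\uparrow\infty$, and mesh tending to $0$ on compacts; sums over $i$ run over $0\le i<k_n$. $\mathcal D$ is the space of càdlàg functions $[0,\infty)\to\mathbb R$ with a metric $d$ inducing the Skorokhod $J_1$ topology. For $u,v,w\in\mathcal D$: $q_n^{(u,v)}(t)=\sum_{i:\,t^n_i\le t}(u(t^n_{i+1})-u(t^n_i))(v(t^n_{i+1})-v(t^n_i))$ and $q_n^{(w)}=q_n^{(w,w)}$. $\mathcal Q^\pi$ is the set of $w\in\mathcal D$ such that $(q_n^{(w)})$ converges in $(\mathcal D,d)$, and for such $w$, $[w]_\pi:=\lim_n q_n^{(w)}$ in $(\mathcal D,d)$. *)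

(* Defs.v *)
From Stdlib Require Import Reals Lra List.
Import ListNotations.
Open Scope R_scope.

(* A sequence of partitions pi = (pi_n): pi_n = (t n 0, ..., t n (k n)). *)
Record partition_seq := {
  pk : nat -> nat;
  pt : nat -> nat -> R
}.

Definition valid_partition_seq (p : partition_seq) : Prop :=
  (forall n, pt p n 0 = 0) /\
  (forall n i, (i < pk p n)%nat -> pt p n i < pt p n (S i)) /\
  (forall n, pt p n (pk p n) <= pt p (S n) (pk p (S n))) /\
  (forall M, exists n, M < pt p n (pk p n)) /\
  (forall T, 0 <= T -> forall eps, 0 < eps -> exists N, forall n, (N <= n)%nat ->
     forall i, (i < pk p n)%nat -> pt p n i <= T ->
       pt p n (S i) - pt p n i < eps).

Definition cadlag (f : R -> R) : Prop :=
  (forall t, 0 <= t -> forall eps, 0 < eps -> exists delta, 0 < delta /\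
     forall s, t <= s < t + delta -> Rabs (f s - f t) < eps) /\
  (forall t, 0 < t -> exists l, forall eps, 0 < eps -> exists delta, 0 < delta /\
     forall s, t - delta < s < t -> Rabs (f s - l) < eps).

Definition qn (p : partition_seq) (u v : R -> R) (n : nat) (t : R) : R :=
  fold_right Rplus 0
    (map (fun i => if Rle_dec (pt p n i) t then
                     (u (pt p n (S i)) - u (pt p n i)) *
                     (v (pt p n (S i)) - v (pt p n i))
                   else 0)
         (seq 0 (pk p n))).

Definition time_change (lam : R -> R) : Prop :=
  lam 0 = 0 /\
  (forall s t, 0 <= s -> s < t -> lam s < lam t) /\
  (forall t, 0 <= t -> continuity_pt lam t) /\
  (forall M, exists t, 0 <= t /\ M < lam t).

(* Convergence in (D, d), d any metric inducing the Skorokhod J1 topology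
   (characterization of Jacod--Shiryaev, Thm VI.1.14(b)). *)
Definition J1_converges (u : nat -> R -> R) (f : R -> R) : Prop :=
  cadlag f /\
  exists lam : nat -> R -> R,
    (forall n, time_change (lam n)) /\
    (forall eps, 0 < eps -> exists N, forall n, (N <= n)%nat ->
       forall s, 0 <= s -> Rabs (lam n s - s) <= eps) /\
    (forall T, 0 <= T -> forall eps, 0 < eps -> exists N, forall n, (N <= n)%nat ->
       forall s, 0 <= s <= T -> Rabs (u n (lam n s) - f s) <= eps).

Definition in_Q (p : partition_seq) (w : R -> R) : Prop :=
  cadlag w /\ exists L, J1_converges (qn p w w) L.

(* Main.v *)
Require Import Defs.
From Stdlib Require Import Reals Lra Lia List ClassicalEpsilon Classical.
Import ListNotations.
Open Scope R_scope.

Fixpoint sumn (F : nat -> R) (m : nat) : R :=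
  match m with O => 0 | S m' => sumn F m' + F m' end.

Lemma fold_plus_shift (l : list R) c : fold_right Rplus c l = c + fold_right Rplus 0 l.
Proof. induction l; simpl; [lra| rewrite IHl; lra]. Qed.

Lemma fold_sumn F m : fold_right Rplus 0 (map F (seq 0 m)) = sumn F m.
Proof.
  induction m. reflexivity.
  rewrite seq_S, map_app, fold_right_app. cbn [map fold_right sumn].
  rewrite fold_plus_shift, IHm. simpl. lra.
Qed.

Lemma sumn_ext F G m : (forall j, (j < m)%nat -> F j = G j) -> sumn F m = sumn G m.
Proof. induction m; intros H; simpl; auto. rewrite IHm, H; auto; intros; apply H; lia. Qed.

Lemma sumn_plus F G m : sumn (fun j => F j + G j) m = sumn F m + sumn G m.
Proof. induction m; simpl; lra. Qed.

Lemma sumn_scal c F m : sumn (fun j => c * F j) m = c * sumn F m.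
Proof. induction m; simpl; [lra|rewrite IHm; lra]. Qed.

Lemma sumn_minus F G m : sumn (fun j => F j - G j) m = sumn F m - sumn G m.
Proof. induction m; simpl; lra. Qed.

Lemma sumn_le F G m : (forall j, (j < m)%nat -> F j <= G j) -> sumn F m <= sumn G m.
Proof. induction m; intros H; simpl; [lra|]. assert (F m <= G m) by (apply H; lia).
  assert (sumn F m <= sumn G m) by (apply IHm; intros; apply H; lia). lra. Qed.

Lemma sumn_abs F m : Rabs (sumn F m) <= sumn (fun j => Rabs (F j)) m.
Proof. induction m; simpl. rewrite Rabs_R0; lra.
  eapply Rle_trans. apply Rabs_triang. lra. Qed.

Lemma sumn_telescope (t : nat -> R) m : sumn (fun j => t (S j) - t j) m = t m - t O.
Proof. induction m; simpl; lra. Qed.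

Lemma sumn_zero F m : (forall j, (j < m)%nat -> F j = 0) -> sumn F m = 0.
Proof. induction m; intros H; simpl; auto. rewrite IHm, H; auto; try lra; intros; apply H; lia. Qed.

Lemma sumn_split F G i m : (i < m)%nat -> (forall j, (j < i)%nat -> F j = G j) ->
  (forall j, (i < j)%nat -> (j < m)%nat -> F j = 0) -> sumn F m = sumn G i + F i.
Proof.
  induction m; intros Him HG HZ. lia.
  simpl. destruct (Nat.eq_dec i m) as [->|Hne].
  - rewrite (sumn_ext F G); auto.
  - assert (E1 : sumn F m = sumn G i + F i) by (apply IHm; [lia|auto|intros; apply HZ; lia]).
    rewrite E1, (HZ m); [lra|lia|lia].
Qed.

Lemma sumn_single F i m : (i < m)%nat -> (forall j, (j < m)%nat -> j <> i -> F j = 0) ->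
  sumn F m = F i.
Proof.
  intros Him H. rewrite (sumn_split F (fun _ => 0) i m); auto.
  rewrite sumn_zero; auto. lra. all: intros; apply H; lia.
Qed.

Lemma sumn_nonzero F m : sumn F m <> 0 -> exists j, (j < m)%nat /\ F j <> 0.
Proof.
  intros H. apply NNPP; intros Hn. apply H. apply sumn_zero. intros j Hj.
  apply NNPP; intros Hf. apply Hn; eauto.
Qed.

Lemma lip_cont f K t : 0 <= K -> (forall a b, Rabs (f a - f b) <= K * Rabs (a - b)) ->
  continuity_pt f t.
Proof.
  intros HK H. unfold continuity_pt, continue_in, limit1_in, limit_in.
  intros eps Heps. exists (eps / (K + 1)). split.
  apply Rdiv_lt_0_compat; lra.
  intros z [_ Hz]. simpl in *. unfold R_dist in *.
  eapply Rle_lt_trans. apply H.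
  apply Rle_lt_trans with ((K+1) * Rabs (z - t)).
  apply Rmult_le_compat_r. apply Rabs_pos. lra.
  apply Rmult_lt_reg_l with (/ (K+1)). apply Rinv_0_lt_compat; lra.
  rewrite <- Rmult_assoc, Rinv_l by lra. rewrite Rmult_1_l.
  unfold Rdiv in Hz. rewrite Rmult_comm. exact Hz.
Qed.

Lemma Rmax0_lip a b : Rabs (Rmax a 0 - Rmax b 0) <= 1 * Rabs (a - b).
Proof. unfold Rmax. destruct (Rle_dec a 0), (Rle_dec b 0);
  unfold Rabs; repeat destruct Rcase_abs; lra. Qed.

Lemma tc_le lam s s' : time_change lam -> 0 <= s -> s <= s' -> lam s <= lam s'.
Proof. intros [_ [H _]] Hs Hss. destruct (Req_dec s s'). subst; lra.
  left; apply H; lra. Qed.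

Lemma tc_nonneg lam s : time_change lam -> 0 <= s -> 0 <= lam s.
Proof. intros Ht Hs. pose proof Ht as [H0 _]. rewrite <- H0. apply tc_le; auto; lra. Qed.

Lemma tc_rev_lt lam a b : time_change lam -> 0 <= a -> 0 <= b -> lam a < lam b -> a < b.
Proof. intros Ht Ha Hb H. destruct (Rlt_le_dec a b); auto.
  assert (lam b <= lam a) by (apply tc_le; auto). lra. Qed.

Lemma tc_rev_le lam a b : time_change lam -> 0 <= a -> 0 <= b -> lam a <= lam b -> a <= b.
Proof. intros Ht Ha Hb H. destruct (Rle_dec a b); auto.
  assert (lam b < lam a) by (destruct Ht as [_ [Hs _]]; apply Hs; lra). lra. Qed.

Lemma tc_surj lam z : time_change lam -> 0 <= z -> exists r, 0 <= r /\ lam r = z.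
Proof.
  intros Ht Hz. pose proof Ht as [H0 [Hinc [Hc Hun]]].
  destruct (Req_dec z 0) as [->|Hz0]. exists 0; split; auto; lra.
  destruct (Hun z) as [t0 [Ht0 Hzt]].
  set (g := fun s => lam (Rmax s 0) - z).
  assert (Hg : continuity g).
  { intros s. unfold g. apply continuity_pt_minus; [|apply continuity_pt_const; intros ? ?; auto].
    change (fun s0 => lam (Rmax s0 0)) with (comp lam (fun s0 => Rmax s0 0)).
    apply continuity_pt_comp. apply (lip_cont _ 1). lra. apply Rmax0_lip.
    apply Hc. apply Rmax_r. }
  assert (t0 <> 0) by (intro; subst; lra).
  destruct (IVT g 0 t0 Hg) as [r [Hr Hgr]].
  lra. unfold g. rewrite Rmax_left by lra. lra.
  unfold g. rewrite Rmax_left by lra. lra.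
  exists r. split. lra. unfold g in Hgr. rewrite Rmax_left in Hgr by lra. lra.
Qed.

Lemma compact_unif (T : R) (P : nat -> R -> Prop) : 0 <= T ->
  (forall c, 0 <= c <= T -> exists d, 0 < d /\ exists N, forall n, (N <= n)%nat ->
      forall s, 0 <= s <= T -> Rabs (s - c) < d -> P n s) ->
  exists N, forall n, (N <= n)%nat -> forall s, 0 <= s <= T -> P n s.
Proof.
  intros HT Hloc.
  set (E := fun a => 0 <= a <= T /\ exists N, forall n, (N <= n)%nat -> forall s, 0 <= s <= a -> P n s).
  assert (HE0 : E 0).
  { split. lra. destruct (Hloc 0) as [d [Hd [N HN]]]. lra. exists N. intros n Hn s Hs.
    apply HN; auto. lra. replace (s - 0) with 0 by lra. rewrite Rabs_R0; lra. }
  assert (Hb : bound E) by (exists T; intros a [Ha _]; lra).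
  destruct (completeness E Hb (ex_intro _ 0 HE0)) as [c [Hub Hlub]].
  assert (Hc0 : 0 <= c) by (apply Hub; auto).
  assert (HcT : c <= T) by (apply Hlub; intros a [Ha _]; lra).
  destruct (Hloc c) as [d [Hd [Nc HNc]]]. lra.
  assert (Ha : exists a, E a /\ c - d < a).
  { apply NNPP. intros Hn. assert (c <= c - d). apply Hlub. intros a Ea.
    destruct (Rle_dec a (c - d)); auto. exfalso; apply Hn; exists a; split; auto; lra. lra. }
  destruct Ha as [a [[Ha [Na HNa]] Hca]].
  set (b := Rmin (c + d/2) T).
  assert (Eb : E b).
  { split. unfold b; unfold Rmin; destruct Rle_dec; lra.
    exists (max Na Nc). intros n Hn s Hs.
    destruct (Rle_dec s a). apply HNa. lia. lra.
    apply HNc. lia. split. lra. assert (b <= T) by apply Rmin_r. lra.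
    assert (b <= c + d/2) by apply Rmin_l. apply Rabs_def1; lra. }
  assert (b <= c) by (apply Hub; auto).
  unfold b in *. unfold Rmin in *. destruct Rle_dec. lra.
  destruct Eb as [_ [N HN]]. exists N. auto.
Qed.

Lemma nat_least (P : nat -> Prop) n : P n -> exists m, P m /\ forall m', P m' -> (m <= m')%nat.
Proof.
  induction n as [n IH] using (well_founded_induction Wf_nat.lt_wf).
  intros Hn. destruct (classic (exists m', (m' < n)%nat /\ P m')) as [[m' [Hm' Pm']]|Hno].
  - apply (IH m'); auto.
  - exists n. split; auto. intros m' Pm'. destruct (Nat.le_gt_cases n m'); auto.
    exfalso; apply Hno; eauto.
Qed.
Lemma grid_step p (V : valid_partition_seq p) n i : (i < pk p n)%nat -> pt p n i < pt p n (S i).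
Proof. destruct V as [_ [H _]]. apply H. Qed.

Lemma grid_lt p (V : valid_partition_seq p) n i m : (i < m)%nat -> (m <= pk p n)%nat -> pt p n i < pt p n m.
Proof.
  induction m; intros Him Hm. lia.
  destruct (Nat.eq_dec i m). subst; apply grid_step; auto; lia.
  apply Rlt_trans with (pt p n m). apply IHm; lia. apply grid_step; auto; lia.
Qed.

Lemma grid_le p (V : valid_partition_seq p) n i m : (i <= m)%nat -> (m <= pk p n)%nat -> pt p n i <= pt p n m.
Proof. intros. destruct (Nat.eq_dec i m). subst; lra. left; apply grid_lt; auto; lia. Qed.

Lemma grid_nonneg p (V : valid_partition_seq p) n i : (i <= pk p n)%nat -> 0 <= pt p n i.
Proof. intros. pose proof V as [H0 _]. rewrite <- (H0 n). apply grid_le; auto; lia. Qed.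

Lemma grid_cell p (V : valid_partition_seq p) n s : 0 < s -> s <= pt p n (pk p n) ->
  exists j, (j < pk p n)%nat /\ pt p n j < s <= pt p n (S j).
Proof.
  intros Hs HsT. pose proof V as [H0 _].
  assert (forall m, (m <= pk p n)%nat -> s <= pt p n m -> exists j, (j < m)%nat /\ pt p n j < s <= pt p n (S j)).
  { induction m; intros Hm Hsm. rewrite H0 in Hsm; lra.
    destruct (Rle_dec s (pt p n m)). destruct IHm as [j [Hj Hj2]]; auto; try lia. exists j; split; auto.
    exists m. split. lia. lra. }
  destruct (H (pk p n)) as [j [Hj Hj2]]; auto.
Qed.

Lemma grid_cell_unique p (V : valid_partition_seq p) n s j j' : (j < pk p n)%nat -> (j' < pk p n)%nat ->
  pt p n j < s <= pt p n (S j) -> pt p n j' < s <= pt p n (S j') -> j = j'.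
Proof.
  intros Hj Hj' H1 H2. destruct (Nat.lt_total j j') as [Hlt|[Heq|Hlt]]; auto.
  - assert (pt p n (S j) <= pt p n j') by (apply grid_le; auto; lia). lra.
  - assert (pt p n (S j') <= pt p n j) by (apply grid_le; auto; lia). lra.
Qed.

Lemma grid_end p (V : valid_partition_seq p) s : exists N, forall n, (N <= n)%nat -> s < pt p n (pk p n).
Proof.
  pose proof V as [_ [_ [Hm [Hu _]]]]. destruct (Hu s) as [N HN]. exists N.
  intros n Hn. induction Hn. auto. specialize (Hm m). lra.
Qed.

Definition qterm p (f g : R -> R) n s i : R :=
  if Rle_dec (pt p n i) s then
    (f (pt p n (S i)) - f (pt p n i)) * (g (pt p n (S i)) - g (pt p n i)) else 0.

Lemma qn_sumn p f g n s : qn p f g n s = sumn (qterm p f g n s) (pk p n).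
Proof. unfold qn. rewrite fold_sumn. reflexivity. Qed.

Lemma qn_identity p x y n s :
  qn p (fun t => x t + y t) (fun t => x t + y t) n s = qn p x x n s + qn p y y n s + 2 * qn p x y n s.
Proof.
  rewrite !qn_sumn. rewrite <- sumn_scal, <- !sumn_plus. apply sumn_ext. intros j _.
  unfold qterm. destruct Rle_dec; ring.
Qed.

Lemma list_gap (L : nat -> R) m z : exists w, w < z /\ forall i, (i < m)%nat -> L i < z -> L i < w.
Proof.
  induction m. exists (z - 1). split. lra. intros; lia.
  destruct IHm as [w [Hw H]]. destruct (Rlt_dec (L m) z).
  - exists (Rmax w ((L m + z)/2)). split. unfold Rmax; destruct Rle_dec; lra.
    intros i Hi Hl. destruct (Nat.eq_dec i m). subst. eapply Rlt_le_trans; [|apply Rmax_r]. lra.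
    eapply Rlt_le_trans; [|apply Rmax_l]. apply H; auto; lia.
  - exists w. split; auto. intros i Hi Hl. destruct (Nat.eq_dec i m). subst; lra. apply H; auto; lia.
Qed.

Definition incr2 p (f g : R -> R) n i : R :=
  (f (pt p n (S i)) - f (pt p n i)) * (g (pt p n (S i)) - g (pt p n i)).

Lemma qn_step p (V : valid_partition_seq p) f g n z :
  exists w, w < z /\ forall v, w <= v < z ->
    (exists i, (i < pk p n)%nat /\ pt p n i = z /\ qn p f g n z - qn p f g n v = incr2 p f g n i) \/
    qn p f g n z - qn p f g n v = 0.
Proof.
  destruct (list_gap (pt p n) (pk p n) z) as [w [Hw Hg]]. exists w. split; auto.
  intros v Hv. rewrite !qn_sumn, <- sumn_minus.
  assert (E : sumn (fun j => qterm p f g n z j - qterm p f g n v j) (pk p n) =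
              sumn (fun j => if Req_dec_T (pt p n j) z then incr2 p f g n j else 0) (pk p n)).
  { apply sumn_ext. intros j Hj. unfold qterm, incr2.
    destruct (Req_dec_T (pt p n j) z).
    - destruct (Rle_dec (pt p n j) z); [|lra]. destruct (Rle_dec (pt p n j) v); [lra|ring].
    - destruct (Rle_dec (pt p n j) z); destruct (Rle_dec (pt p n j) v); try ring.
      + assert (pt p n j < z) by lra. specialize (Hg j Hj H). lra.
      + lra. }
  rewrite E. destruct (classic (exists i, (i < pk p n)%nat /\ pt p n i = z)) as [[i [Hi Hiz]]|Hno].
  - left. exists i. split; auto. split; auto. rewrite (sumn_single _ i); auto.
    destruct Req_dec_T; [auto|contradiction].
    intros j Hj Hji. destruct Req_dec_T; auto. exfalso.
    destruct (Nat.lt_total j i) as [H|[H|H]]; [|contradiction|].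
    assert (pt p n j < pt p n i) by (apply grid_lt; auto; lia). lra.
    assert (pt p n i < pt p n j) by (apply grid_lt; auto; lia). lra.
  - right. apply sumn_zero. intros j Hj. destruct Req_dec_T; auto. exfalso; eauto.
Qed.
Lemma cadlag_ext f g : cadlag f -> (forall t, f t = g t) -> cadlag g.
Proof.
  intros [Hr Hl] E. split.
  - intros t Ht eps He. destruct (Hr t Ht eps He) as [d [Hd H]]. exists d. split; auto.
    intros s Hs. rewrite <- !E. auto.
  - intros t Ht. destruct (Hl t Ht) as [l H]. exists l. intros eps He.
    destruct (H eps He) as [d [Hd H']]. exists d; split; auto. intros s Hs; rewrite <- E; auto.
Qed.

Lemma cadlag_plus f g : cadlag f -> cadlag g -> cadlag (fun t => f t + g t).
Proof.
  intros [Hr Hl] [Gr Gl]. split.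
  - intros t Ht eps He. destruct (Hr t Ht (eps/2)) as [d1 [Hd1 H1]]. lra.
    destruct (Gr t Ht (eps/2)) as [d2 [Hd2 H2]]. lra.
    exists (Rmin d1 d2). split. apply Rmin_glb_lt; auto.
    intros s Hs. assert (s < t + d1) by (pose proof (Rmin_l d1 d2); lra).
    assert (s < t + d2) by (pose proof (Rmin_r d1 d2); lra).
    specialize (H1 s ltac:(lra)). specialize (H2 s ltac:(lra)).
    replace (f s + g s - (f t + g t)) with ((f s - f t) + (g s - g t)) by ring.
    eapply Rle_lt_trans. apply Rabs_triang. lra.
  - intros t Ht. destruct (Hl t Ht) as [l1 H1]. destruct (Gl t Ht) as [l2 H2].
    exists (l1 + l2). intros eps He.
    destruct (H1 (eps/2)) as [d1 [Hd1 H1']]. lra.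
    destruct (H2 (eps/2)) as [d2 [Hd2 H2']]. lra.
    exists (Rmin d1 d2). split. apply Rmin_glb_lt; auto.
    intros s Hs. assert (t - d1 < s) by (pose proof (Rmin_l d1 d2); lra).
    assert (t - d2 < s) by (pose proof (Rmin_r d1 d2); lra).
    specialize (H1' s ltac:(lra)). specialize (H2' s ltac:(lra)).
    replace (f s + g s - (l1 + l2)) with ((f s - l1) + (g s - l2)) by ring.
    eapply Rle_lt_trans. apply Rabs_triang. lra.
Qed.

Lemma cadlag_scal c f : cadlag f -> cadlag (fun t => c * f t).
Proof.
  intros [Hr Hl]. assert (Hc : 0 < Rabs c + 1) by (pose proof (Rabs_pos c); lra). split.
  - intros t Ht eps He. destruct (Hr t Ht (eps / (Rabs c + 1))) as [d [Hd H]].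
    apply Rdiv_lt_0_compat; lra.
    exists d; split; auto. intros s Hs. specialize (H s Hs).
    replace (c * f s - c * f t) with (c * (f s - f t)) by ring. rewrite Rabs_mult.
    apply Rle_lt_trans with (Rabs c * (eps / (Rabs c + 1))).
    apply Rmult_le_compat_l. apply Rabs_pos. lra.
    assert (Eq : eps = (eps / (Rabs c + 1)) * (Rabs c + 1)) by (field; lra).
    assert (0 < eps / (Rabs c + 1)) by (apply Rdiv_lt_0_compat; lra).
    set (q := eps / (Rabs c + 1)) in *. nra.
  - intros t Ht. destruct (Hl t Ht) as [l H]. exists (c * l). intros eps He.
    destruct (H (eps / (Rabs c + 1))) as [d [Hd H']]. apply Rdiv_lt_0_compat; lra.
    exists d; split; auto. intros s Hs. specialize (H' s Hs).
    replace (c * f s - c * l) with (c * (f s - l)) by ring. rewrite Rabs_mult.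
    apply Rle_lt_trans with (Rabs c * (eps / (Rabs c + 1))).
    apply Rmult_le_compat_l. apply Rabs_pos. lra.
    assert (Eq : eps = (eps / (Rabs c + 1)) * (Rabs c + 1)) by (field; lra).
    assert (0 < eps / (Rabs c + 1)) by (apply Rdiv_lt_0_compat; lra).
    set (q := eps / (Rabs c + 1)) in *. nra.
Qed.

Definition LC (f : R -> R) (t : R) : Prop :=
  forall eps, 0 < eps -> exists d, 0 < d /\ forall v, t - d < v < t -> Rabs (f v - f t) < eps.

Lemma LC_plus f g t : LC f t -> LC g t -> LC (fun s => f s + g s) t.
Proof.
  intros H1 H2 eps He. destruct (H1 (eps/2)) as [d1 [Hd1 H1']]. lra.
  destruct (H2 (eps/2)) as [d2 [Hd2 H2']]. lra.
  exists (Rmin d1 d2). split. apply Rmin_glb_lt; auto.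
  intros s Hs. assert (t - d1 < s) by (pose proof (Rmin_l d1 d2); lra).
  assert (t - d2 < s) by (pose proof (Rmin_r d1 d2); lra).
  specialize (H1' s ltac:(lra)). specialize (H2' s ltac:(lra)).
  replace (f s + g s - (f t + g t)) with ((f s - f t) + (g s - g t)) by ring.
  eapply Rle_lt_trans. apply Rabs_triang. lra.
Qed.

Lemma prod_small A B e eta : 0 < e -> eta = Rmin 1 (e/4) -> Rabs A < 2 * eta -> Rabs B < 2 * eta ->
  Rabs (A * B) < e.
Proof.
  intros He Heta HA HB. rewrite Rabs_mult.
  assert (eta <= 1) by (rewrite Heta; apply Rmin_l). assert (eta <= e/4) by (rewrite Heta; apply Rmin_r).
  pose proof (Rabs_pos A). pose proof (Rabs_pos B). nra.
Qed.

Lemma one_side_small f t0 eta : cadlag f -> 0 < t0 -> 0 < eta -> exists d, 0 < d /\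
  (forall u1 u2, t0 - d < u1 -> u1 < u2 -> u2 < t0 + d -> (u2 < t0 \/ t0 <= u1) ->
     Rabs (f u2 - f u1) < 2 * eta).
Proof.
  intros [Hr Hl] Ht Heta. destruct (Hr t0 ltac:(lra) eta Heta) as [d1 [Hd1 H1]].
  destruct (Hl t0 Ht) as [l Hl']. destruct (Hl' eta Heta) as [d2 [Hd2 H2]].
  exists (Rmin d1 d2). split. apply Rmin_glb_lt; auto.
  pose proof (Rmin_l d1 d2). pose proof (Rmin_r d1 d2).
  intros u1 u2 Hu1 Hu12 Hu2 [Hc|Hc].
  - pose proof (H2 u1 ltac:(lra)). pose proof (H2 u2 ltac:(lra)).
    replace (f u2 - f u1) with ((f u2 - l) - (f u1 - l)) by ring.
    eapply Rle_lt_trans. apply Rabs_triang. rewrite Rabs_Ropp. lra.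
  - pose proof (H1 u1 ltac:(lra)). pose proof (H1 u2 ltac:(lra)).
    replace (f u2 - f u1) with ((f u2 - f t0) - (f u1 - f t0)) by ring.
    eapply Rle_lt_trans. apply Rabs_triang. rewrite Rabs_Ropp. lra.
Qed.

Lemma straddle_small f t0 eta : cadlag f -> LC f t0 -> 0 < t0 -> 0 < eta -> exists d, 0 < d /\
  (forall u1 u2, t0 - d < u1 -> u1 < t0 -> t0 <= u2 -> u2 < t0 + d -> Rabs (f u2 - f u1) < 2 * eta).
Proof.
  intros [Hr _] HL Ht Heta. destruct (Hr t0 ltac:(lra) eta Heta) as [d1 [Hd1 H1]].
  destruct (HL eta Heta) as [d2 [Hd2 H2]].
  exists (Rmin d1 d2). split. apply Rmin_glb_lt; auto.
  pose proof (Rmin_l d1 d2). pose proof (Rmin_r d1 d2).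
  intros u1 u2 Hu1 Hu1' Hu2 Hu2'. specialize (H2 u1 ltac:(lra)). specialize (H1 u2 ltac:(lra)).
  replace (f u2 - f u1) with ((f u2 - f t0) - (f u1 - f t0)) by ring.
  eapply Rle_lt_trans. apply Rabs_triang. rewrite Rabs_Ropp. lra.
Qed.

Lemma near_small f g t0 e : cadlag f -> cadlag g -> 0 < t0 -> 0 < e -> exists d, 0 < d /\
  forall u1 u2, t0 - d < u1 -> u1 < u2 -> u2 < t0 + d ->
    (u2 < t0 \/ t0 <= u1 \/ (LC f t0 /\ LC g t0)) ->
    Rabs ((f u2 - f u1) * (g u2 - g u1)) < e.
Proof.
  intros Cf Cg Ht He. set (eta := Rmin 1 (e/4)).
  assert (Heta : 0 < eta) by (unfold eta; apply Rmin_glb_lt; lra).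
  destruct (one_side_small f t0 eta Cf Ht Heta) as [d1 [Hd1 H1]].
  destruct (one_side_small g t0 eta Cg Ht Heta) as [d2 [Hd2 H2]].
  destruct (classic (LC f t0 /\ LC g t0)) as [[Lf Lg]|HnL].
  - destruct (straddle_small f t0 eta Cf Lf Ht Heta) as [d3 [Hd3 H3]].
    destruct (straddle_small g t0 eta Cg Lg Ht Heta) as [d4 [Hd4 H4]].
    exists (Rmin (Rmin d1 d2) (Rmin d3 d4)). split.
    repeat apply Rmin_glb_lt; auto.
    pose proof (Rmin_l (Rmin d1 d2) (Rmin d3 d4)). pose proof (Rmin_r (Rmin d1 d2) (Rmin d3 d4)).
    pose proof (Rmin_l d1 d2). pose proof (Rmin_r d1 d2). pose proof (Rmin_l d3 d4). pose proof (Rmin_r d3 d4).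
    intros u1 u2 Hu1 Hu12 Hu2 _. apply (prod_small _ _ e eta); auto.
    destruct (Rlt_le_dec u2 t0). apply H1; auto; lra.
    destruct (Rle_lt_dec t0 u1). apply H1; auto; lra. apply H3; lra.
    destruct (Rlt_le_dec u2 t0). apply H2; auto; lra.
    destruct (Rle_lt_dec t0 u1). apply H2; auto; lra. apply H4; lra.
  - exists (Rmin d1 d2). split. apply Rmin_glb_lt; auto.
    pose proof (Rmin_l d1 d2). pose proof (Rmin_r d1 d2).
    intros u1 u2 Hu1 Hu12 Hu2 Hc. assert (Hc' : u2 < t0 \/ t0 <= u1) by tauto.
    apply (prod_small _ _ e eta); auto. apply H1; auto; lra. apply H2; auto; lra.
Qed.
Lemma abs_le_iff x e : Rabs x <= e -> -e <= x <= e.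
Proof. unfold Rabs; destruct Rcase_abs; lra. Qed.
Lemma abs_lt_iff x e : Rabs x < e -> -e < x < e.
Proof. unfold Rabs; destruct Rcase_abs; lra. Qed.
Lemma abs_intro x e : -e <= x <= e -> Rabs x <= e.
Proof. unfold Rabs; destruct Rcase_abs; lra. Qed.
Lemma abs_intro_lt x e : -e < x < e -> Rabs x < e.
Proof. unfold Rabs; destruct Rcase_abs; lra. Qed.

Lemma F1 p (V : valid_partition_seq p) f g u (mu : nat -> R -> R) t0 l :
  cadlag f -> cadlag g ->
  (forall n, time_change (mu n)) ->
  (forall e, 0 < e -> exists N, forall n, (N <= n)%nat -> forall s, 0 <= s -> Rabs (mu n s - s) <= e) ->
  (forall T, 0 <= T -> forall e, 0 < e -> exists N, forall n, (N <= n)%nat ->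
      forall s, 0 <= s <= T -> Rabs (qn p f g n (mu n s) - u s) <= e) ->
  0 < t0 ->
  (forall eps, 0 < eps -> exists d, 0 < d /\ forall s, t0 - d < s < t0 -> Rabs (u s - l) < eps) ->
  l <> u t0 ->
  ~ (LC f t0 /\ LC g t0) /\
  exists N, forall n, (N <= n)%nat -> exists j, (j < pk p n)%nat /\
     pt p n j < t0 <= pt p n (S j) /\ mu n t0 = pt p n j.
Proof.
  intros Cf Cg Hmu Hid HU Ht0 Hl Hne.
  set (a := Rabs (u t0 - l)).
  assert (Ha : 0 < a) by (unfold a; apply Rabs_pos_lt; lra).
  destruct (Hl (a/8)) as [d1 [Hd1 H1]]. lra.
  assert (C : forall e, 0 < e -> exists N, forall n, (N <= n)%nat -> exists j, (j < pk p n)%nat /\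
     mu n t0 = pt p n j /\ a/2 <= Rabs (incr2 p f g n j) /\ Rabs (pt p n j - t0) <= e /\
     pt p n (S j) - pt p n j < e).
  { intros e He.
    destruct (HU (t0 + 1) ltac:(lra) (a/8) ltac:(lra)) as [N1 HN1].
    destruct (Hid (Rmin e 1)) as [N2 HN2]. apply Rmin_glb_lt; lra.
    pose proof V as [_ [_ [_ [_ Hmesh]]]].
    destruct (Hmesh (t0 + 1) ltac:(lra) e He) as [N3 HN3].
    exists (max N1 (max N2 N3)). intros n Hn.
    set (z := mu n t0).
    destruct (qn_step p V f g n z) as [w [Hw Hstep]].
    set (s0 := Rmax (t0 - d1/2) (t0/2)).
    assert (Hs0 : t0 - d1 < s0 < t0 /\ 0 < s0) by (unfold s0, Rmax; destruct Rle_dec; lra).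
    assert (Hms0 : mu n s0 < z) by (apply (Hmu n); lra).
    assert (Hms0' : 0 <= mu n s0) by (apply tc_nonneg; auto; lra).
    set (v := Rmax w (mu n s0)).
    assert (Hv : w <= v < z /\ mu n s0 <= v) by (unfold v, Rmax; destruct Rle_dec; lra).
    destruct (tc_surj (mu n) v (Hmu n)) as [r [Hr Hrv]]. lra.
    assert (Hrt : r < t0). { apply (tc_rev_lt (mu n)); auto; try lra. rewrite Hrv; fold z; lra. }
    assert (Hrs : s0 <= r). { apply (tc_rev_le (mu n)); auto; try lra. }
    assert (E1 : Rabs (qn p f g n (mu n r) - u r) <= a/8) by (apply HN1; [lia|lra]).
    assert (E2 : Rabs (qn p f g n z - u t0) <= a/8) by (apply HN1; [lia|lra]).
    assert (E3 : Rabs (u r - l) < a/8) by (apply H1; lra).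
    rewrite Hrv in E1.
    assert (E4 : 5 * a / 8 <= Rabs (qn p f g n z - qn p f g n v)).
    { assert (a <= Rabs (u t0 - qn p f g n z) + Rabs (qn p f g n z - qn p f g n v)
                 + Rabs (qn p f g n v - u r) + Rabs (u r - l)).
      { unfold a. replace (u t0 - l) with ((u t0 - qn p f g n z) + (qn p f g n z - qn p f g n v)
                 + (qn p f g n v - u r) + (u r - l)) by ring.
        eapply Rle_trans. apply Rabs_triang. apply Rplus_le_compat_r.
        eapply Rle_trans. apply Rabs_triang. apply Rplus_le_compat_r. apply Rabs_triang. }
      rewrite Rabs_minus_sym in E2. lra. }
    destruct (Hstep v ltac:(lra)) as [[i [Hi [Hiz Hd]]]|Hd]; rewrite Hd in E4.
    - exists i. split; auto. split; auto. split. lra.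
      assert (Hzt : Rabs (z - t0) <= Rmin e 1) by (apply HN2; [lia|lra]).
      pose proof (Rmin_l e 1). pose proof (Rmin_r e 1).
      split. rewrite Hiz. lra. apply HN3; [lia|auto|].
      apply abs_le_iff in Hzt. lra.
    - rewrite Rabs_R0 in E4. lra. }
  destruct (near_small f g t0 (a/2) Cf Cg Ht0) as [d2 [Hd2 Hns]]. lra.
  destruct (C (d2/2)) as [N HN]. lra.
  assert (Key : forall n, (N <= n)%nat -> forall j, (j < pk p n)%nat -> a/2 <= Rabs (incr2 p f g n j) ->
     Rabs (pt p n j - t0) <= d2/2 -> pt p n (S j) - pt p n j < d2/2 ->
     ~ (pt p n (S j) < t0 \/ t0 <= pt p n j \/ (LC f t0 /\ LC g t0))).
  { intros n Hn j Hj Hinc Hjt Hc Hor. apply abs_le_iff in Hjt.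
    assert (pt p n j < pt p n (S j)) by (apply grid_step; auto).
    assert (Rabs (incr2 p f g n j) < a/2). { unfold incr2. apply Hns; auto; lra. }
    lra. }
  split.
  - intros HL. destruct (HN N (le_n N)) as [j [Hj [Hz [Hinc [Hjt Hcell]]]]].
    apply (Key N (le_n N) j); auto.
  - exists N. intros n Hn. destruct (HN n Hn) as [j [Hj [Hz [Hinc [Hjt Hcell]]]]].
    exists j. split; auto. split; auto.
    destruct (Rlt_le_dec (pt p n j) t0); destruct (Rle_lt_dec t0 (pt p n (S j))).
    lra. all: exfalso; apply (Key n Hn j); auto.
Qed.
Definition clamp s a b := Rmin (Rmax s a) b.

Definition PL (a t : nat -> R) (k : nat) (s : R) : R :=
  sumn (fun j => (t (S j) - t j) / (a (S j) - a j) * (clamp s (a j) (a (S j)) - a j)) k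
  + Rmax (s - a k) 0.

Lemma clamp_lo s a b : a <= b -> s <= a -> clamp s a b = a.
Proof. intros. unfold clamp, Rmin, Rmax. repeat destruct Rle_dec; lra. Qed.
Lemma clamp_hi s a b : a <= b -> b <= s -> clamp s a b = b.
Proof. intros. unfold clamp, Rmin, Rmax. repeat destruct Rle_dec; lra. Qed.
Lemma clamp_mid s a b : a <= s <= b -> clamp s a b = s.
Proof. intros. unfold clamp, Rmin, Rmax. repeat destruct Rle_dec; lra. Qed.
Lemma clamp_mono s s' a b : a <= b -> s <= s' -> clamp s a b <= clamp s' a b.
Proof. intros. unfold clamp, Rmin, Rmax. repeat destruct Rle_dec; lra. Qed.
Lemma clamp_lip s s' a b : a <= b -> Rabs (clamp s a b - clamp s' a b) <= Rabs (s - s').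
Proof. intros. unfold clamp, Rmin, Rmax. repeat destruct Rle_dec; unfold Rabs; repeat destruct Rcase_abs; lra. Qed.
Lemma Rmax_lip s s' c : Rabs (Rmax (s - c) 0 - Rmax (s' - c) 0) <= Rabs (s - s').
Proof. unfold Rmax. repeat destruct Rle_dec; unfold Rabs; repeat destruct Rcase_abs; lra. Qed.

Lemma incr_mono (a : nat -> R) k : (forall j, (j < k)%nat -> a j < a (S j)) ->
  forall i m, (i <= m)%nat -> (m <= k)%nat -> a i <= a m.
Proof.
  intros Ha i m Him Hm. induction m. assert (i = 0%nat) by lia. subst; lra.
  destruct (Nat.eq_dec i (S m)). subst; lra.
  apply Rle_trans with (a m). apply IHm; lia. left; apply Ha; lia.
Qed.


Lemma PL_piece a t k i s : (forall j, (j < k)%nat -> a j < a (S j)) -> (i < k)%nat ->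
  a i <= s <= a (S i) ->
  PL a t k s = t i - t O + (t (S i) - t i) / (a (S i) - a i) * (s - a i).
Proof.
  intros Ha Hi Hs. unfold PL.
  assert (Hm := incr_mono a k Ha).
  rewrite (sumn_split _ (fun j => t (S j) - t j) i k Hi).
  - rewrite sumn_telescope. rewrite clamp_mid by lra.
    rewrite Rmax_right. ring. assert (a (S i) <= a k) by (apply Hm; lia). lra.
  - intros j Hj. rewrite clamp_hi. field. assert (a j < a (S j)) by (apply Ha; lia). lra.
    assert (a j < a (S j)) by (apply Ha; lia). lra.
    assert (a (S j) <= a i) by (apply Hm; lia). lra.
  - intros j Hj Hjk. rewrite clamp_lo. ring. assert (a j < a (S j)) by (apply Ha; lia). lra.
    assert (a (S i) <= a j) by (apply Hm; lia). lra.
Qed.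

Lemma PL_tail a t k s : (forall j, (j < k)%nat -> a j < a (S j)) -> a k <= s ->
  PL a t k s = t k - t O + (s - a k).
Proof.
  intros Ha Hs. unfold PL. assert (Hm := incr_mono a k Ha).
  rewrite (sumn_ext _ (fun j => t (S j) - t j)). rewrite sumn_telescope. rewrite Rmax_left by lra. ring.
  intros j Hj. rewrite clamp_hi. field. assert (a j < a (S j)) by (apply Ha; lia). lra.
  assert (a j < a (S j)) by (apply Ha; lia). lra.
  assert (a (S j) <= a k) by (apply Hm; lia). lra.
Qed.

Lemma PL_at a t k i : (forall j, (j < k)%nat -> a j < a (S j)) -> (i <= k)%nat ->
  PL a t k (a i) = t i - t O.
Proof.
  intros Ha Hi. destruct (Nat.eq_dec i k). subst. rewrite PL_tail; auto; lra.
  rewrite (PL_piece a t k i); try lia; auto. ring. split. lra. left; apply Ha; lia.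
Qed.

Lemma PL_loc a k s : (forall j, (j < k)%nat -> a j < a (S j)) -> a O <= s ->
  (exists i, (i < k)%nat /\ a i <= s <= a (S i)) \/ a k <= s.
Proof.
  intros Ha Hs. induction k. right; auto.
  destruct IHk as [[i [Hi Hi2]]|Hk]. intros; apply Ha; lia.
  left; exists i; split; auto; lia.
  destruct (Rle_dec (a (S k)) s). right; auto. left; exists k; split. lia. lra.
Qed.



Lemma sumn_pos F m i : (forall j, (j < m)%nat -> 0 <= F j) -> (i < m)%nat -> 0 < F i -> 0 < sumn F m.
Proof.
  intros H. induction m; intros Hi Hp. lia. simpl.
  destruct (Nat.eq_dec i m). subst.
  assert (0 <= sumn F m). { rewrite <- (sumn_zero (fun _ => 0) m) by auto. apply sumn_le. intros; apply H; lia. }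
  lra.
  assert (0 < sumn F m) by (apply IHm; [intros; apply H; lia | lia | auto]).
  assert (0 <= F m) by (apply H; lia). lra.
Qed.

Lemma clamp_sum a k s : (forall j, (j < k)%nat -> a j < a (S j)) -> a O <= s ->
  sumn (fun j => clamp s (a j) (a (S j)) - a j) k + Rmax (s - a k) 0 = s - a O.
Proof.
  intros Ha Hs. assert (Hm := incr_mono a k Ha).
  assert (forall m, (m <= k)%nat -> sumn (fun j => clamp s (a j) (a (S j)) - a j) m = clamp s (a O) (a m) - a O).
  { induction m; intros Hmk. simpl. unfold clamp, Rmin, Rmax. repeat destruct Rle_dec; lra.
    simpl. rewrite IHm by lia. assert (a m < a (S m)) by (apply Ha; lia).
    assert (a O <= a m) by (apply Hm; lia).
    unfold clamp, Rmin, Rmax. repeat destruct Rle_dec; lra. }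
  rewrite H by lia. assert (a O <= a k) by (apply Hm; lia).
  unfold clamp, Rmin, Rmax. repeat destruct Rle_dec; lra.
Qed.

Lemma PL_strict a t k s s' : (forall j, (j < k)%nat -> a j < a (S j)) ->
  (forall j, (j < k)%nat -> t j < t (S j)) -> a O <= s -> s < s' -> PL a t k s < PL a t k s'.
Proof.
  intros Ha Ht Hs Hss.
  assert (Hsl : forall j, (j < k)%nat -> 0 < (t (S j) - t j) / (a (S j) - a j)).
  { intros j Hj. apply Rdiv_lt_0_compat. specialize (Ht j Hj); lra. specialize (Ha j Hj); lra. }
  assert (E1 := clamp_sum a k s Ha Hs). assert (E2 := clamp_sum a k s' Ha ltac:(lra)).
  unfold PL.
  assert (Hd : forall j, (j < k)%nat -> 0 <= clamp s' (a j) (a (S j)) - clamp s (a j) (a (S j))).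
  { intros j Hj. assert (a j < a (S j)) by (apply Ha; lia). pose proof (clamp_mono s s' (a j) (a (S j))). lra. }
  assert (Hmx : Rmax (s - a k) 0 <= Rmax (s' - a k) 0) by (unfold Rmax; repeat destruct Rle_dec; lra).
  set (F := fun j => (t (S j) - t j) / (a (S j) - a j) * (clamp s' (a j) (a (S j)) - clamp s (a j) (a (S j)))).
  assert (HF : forall j, (j < k)%nat -> 0 <= F j).
  { intros j Hj. unfold F. apply Rmult_le_pos. left; auto. auto. }
  assert (Esplit : sumn (fun j => (t (S j) - t j) / (a (S j) - a j) * (clamp s' (a j) (a (S j)) - a j)) k
     = sumn (fun j => (t (S j) - t j) / (a (S j) - a j) * (clamp s (a j) (a (S j)) - a j)) k + sumn F k).
  { rewrite <- sumn_plus. apply sumn_ext. intros; unfold F; ring. }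
  rewrite Esplit.
  destruct (Rlt_dec (Rmax (s - a k) 0) (Rmax (s' - a k) 0)).
  - assert (0 <= sumn F k). { rewrite <- (sumn_zero (fun _ => 0) k) by auto. apply sumn_le. auto. } lra.
  - assert (Hex : exists i, (i < k)%nat /\ 0 < clamp s' (a i) (a (S i)) - clamp s (a i) (a (S i))).
    { apply NNPP; intros Hno.
      assert (sumn (fun j => clamp s' (a j) (a (S j)) - a j) k = sumn (fun j => clamp s (a j) (a (S j)) - a j) k).
      { apply sumn_ext. intros j Hj. assert (~ 0 < clamp s' (a j) (a (S j)) - clamp s (a j) (a (S j))) by eauto.
        specialize (Hd j Hj). lra. }
      lra. }
    destruct Hex as [i [Hi Hpos]].
    assert (0 < sumn F k). { apply (sumn_pos F k i); auto. unfold F. apply Rmult_lt_0_compat; auto. }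
    lra.
Qed.

Lemma PL_lip a t k : (forall j, (j < k)%nat -> a j < a (S j)) ->
  (forall j, (j < k)%nat -> t j < t (S j)) ->
  forall s s', Rabs (PL a t k s - PL a t k s') <=
    (sumn (fun j => (t (S j) - t j) / (a (S j) - a j)) k + 1) * Rabs (s - s').
Proof.
  intros Ha Ht s s'. unfold PL.
  assert (Hsl : forall j, (j < k)%nat -> 0 < (t (S j) - t j) / (a (S j) - a j)).
  { intros j Hj. apply Rdiv_lt_0_compat. specialize (Ht j Hj); lra. specialize (Ha j Hj); lra. }
  replace (sumn (fun j => (t (S j) - t j) / (a (S j) - a j) * (clamp s (a j) (a (S j)) - a j)) k +
   Rmax (s - a k) 0 -
   (sumn (fun j => (t (S j) - t j) / (a (S j) - a j) * (clamp s' (a j) (a (S j)) - a j)) k +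
    Rmax (s' - a k) 0))
   with (sumn (fun j => (t (S j) - t j) / (a (S j) - a j) * (clamp s (a j) (a (S j)) - clamp s' (a j) (a (S j)))) k
        + (Rmax (s - a k) 0 - Rmax (s' - a k) 0)).
  2: { assert (E : sumn (fun j => (t (S j) - t j) / (a (S j) - a j) * (clamp s (a j) (a (S j)) - clamp s' (a j) (a (S j)))) k
          = sumn (fun j => (t (S j) - t j) / (a (S j) - a j) * (clamp s (a j) (a (S j)) - a j)) k -
            sumn (fun j => (t (S j) - t j) / (a (S j) - a j) * (clamp s' (a j) (a (S j)) - a j)) k)
         by (rewrite <- sumn_minus; apply sumn_ext; intros; ring).
       rewrite E; ring. }
  eapply Rle_trans. apply Rabs_triang. rewrite Rmult_plus_distr_r, Rmult_1_l.
  apply Rplus_le_compat; [|apply Rmax_lip].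
  eapply Rle_trans. apply sumn_abs. rewrite (Rmult_comm (sumn _ k)). rewrite <- sumn_scal.
  apply sumn_le. intros j Hj. rewrite Rabs_mult. rewrite (Rabs_pos_eq ((t (S j) - t j) / (a (S j) - a j))) by (left; auto).
  rewrite (Rmult_comm (Rabs (s - s'))).
  apply Rmult_le_compat_l. left; auto. apply clamp_lip. specialize (Ha j Hj); lra.
Qed.
Lemma nat_above T : exists m, T < INR m /\ (1 <= m)%nat.
Proof.
  destruct (archimed_cor1 (/ (Rabs T + 1))) as [N [HN HN0]].
  apply Rinv_0_lt_compat. pose proof (Rabs_pos T); lra.
  exists N. split; [|lia]. assert (0 < INR N) by (apply lt_0_INR; lia).
  assert (Rabs T + 1 < INR N).
  { destruct (Rlt_le_dec (Rabs T + 1) (INR N)) as [h|h]; auto.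
    assert (/ (Rabs T + 1) <= / INR N) by (apply Rinv_le_contravar; auto). lra. }
  pose proof (Rle_abs T). lra.
Qed.

Lemma fold_min_pos (l : list R) : (forall z, In z l -> 0 < z) -> 0 < fold_right Rmin 1 l.
Proof. induction l; simpl; intros H. lra. apply Rmin_glb_lt; auto. Qed.

Lemma fold_min_le (l : list R) z : In z l -> fold_right Rmin 1 l <= z.
Proof. induction l; simpl; intros H. contradiction. destruct H. subst; apply Rmin_l.
  eapply Rle_trans. apply Rmin_r. auto. Qed.

Lemma fold_min_att (l : list R) : fold_right Rmin 1 l = 1 \/ In (fold_right Rmin 1 l) l.
Proof. induction l; simpl. left; reflexivity.
  destruct (Rle_dec a (fold_right Rmin 1 l)).
  rewrite Rmin_left by auto. right; left; auto.
  rewrite Rmin_right by lra. destruct IHl as [H|H]; [left|right;right]; auto. Qed.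

Definition theta (Nm : nat -> nat) (n : nat) : R :=
  fold_right Rmin 1 (map (fun m => if Nat.leb (Nm m) n then / (INR m + 1) else 1) (seq 0 (S n))).

Lemma theta_pos Nm n : 0 < theta Nm n.
Proof.
  apply fold_min_pos. intros z Hz. apply in_map_iff in Hz. destruct Hz as [m [<- _]].
  destruct Nat.leb. apply Rinv_0_lt_compat. pose proof (pos_INR m); lra. lra.
Qed.

Lemma theta_small Nm m n : (Nm m <= n)%nat -> (m <= n)%nat -> theta Nm n <= / (INR m + 1).
Proof.
  intros H1 H2. unfold theta. apply fold_min_le. apply in_map_iff. exists m. split.
  apply Nat.leb_le in H1. rewrite H1. auto. apply in_seq. lia.
Qed.

Lemma theta_to0 Nm e : 0 < e -> exists N, forall n, (N <= n)%nat -> theta Nm n <= e.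
Proof.
  intros He. destruct (archimed_cor1 e He) as [m [Hm Hm0]].
  exists (max (Nm m) m). intros n Hn. eapply Rle_trans. apply (theta_small Nm m n); lia.
  assert (0 < INR m) by (apply lt_0_INR; lia).
  left. eapply Rlt_trans; [|apply Hm]. apply Rinv_lt_contravar. nra. lra.
Qed.

Definition NmProp p (Nm : nat -> nat) : Prop :=
  forall m n, (Nm m <= n)%nat -> forall j, (j < pk p n)%nat -> pt p n j <= INR m ->
    pt p n (S j) - pt p n j < / (INR m + 1).

Lemma Nm_exists p (V : valid_partition_seq p) : exists Nm, NmProp p Nm.
Proof.
  pose proof V as [_ [_ [_ [_ Hmesh]]]].
  exists (fun m => epsilon (inhabits 0%nat) (fun N => forall n, (N <= n)%nat -> forall j, (j < pk p n)%nat ->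
      pt p n j <= INR m -> pt p n (S j) - pt p n j < / (INR m + 1))).
  intros m. apply epsilon_spec. apply Hmesh. apply pos_INR.
  apply Rinv_0_lt_compat. pose proof (pos_INR m); lra.
Qed.

Lemma theta_cells p Nm (HN : NmProp p Nm) T : exists N, forall n, (N <= n)%nat ->
  forall j, (j < pk p n)%nat -> pt p n j <= T -> pt p n (S j) - pt p n j <= theta Nm n.
Proof.
  destruct (nat_above T) as [m1 [Hm1 Hm1']].
  exists (max (Nm m1) m1). intros n Hn j Hj HjT.
  assert (Hth : theta Nm n <= / (INR m1 + 1)) by (apply theta_small; lia).
  assert (Hm1r : 1 <= INR m1) by (apply (le_INR 1); lia).
  assert (Hlt1 : / (INR m1 + 1) < 1). { rewrite <- Rinv_1. apply Rinv_lt_contravar; lra. }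
  destruct (fold_min_att (map (fun m => if Nat.leb (Nm m) n then / (INR m + 1) else 1) (seq 0 (S n))))
    as [H1|H1]; fold (theta Nm n) in H1. lra.
  apply in_map_iff in H1. destruct H1 as [m0 [Hm0 _]].
  destruct (Nat.leb (Nm m0) n) eqn:Eb; [|lra].
  apply Nat.leb_le in Eb.
  assert (INR m1 <= INR m0).
  { rewrite <- Hm0 in Hth. destruct (Rle_dec (INR m1) (INR m0)); auto.
    assert (/ (INR m1 + 1) < / (INR m0 + 1)). { apply Rinv_lt_contravar. pose proof (pos_INR m0); nra. lra. }
    lra. }
  rewrite <- Hm0. left. apply HN; auto. lra.
Qed.

Definition Jp (x y : R -> R) (eta t : R) : Prop :=
  forall d, 0 < d -> exists v, t - d < v < t /\ (eta <= Rabs (x v - x t) \/ eta <= Rabs (y v - y t)).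
Definition Jk x y (k : nat) t := Jp x y (/ 2 ^ k) t.

Definition cellP p x y n j c : Prop :=
  pt p n j < c <= pt p n (S j) /\ exists k, Jk x y k c /\
   forall k' c', pt p n j < c' <= pt p n (S j) -> Jk x y k' c' -> (k <= k')%nat.

Definition anch p x y n j : R := epsilon (inhabits 0) (cellP p x y n j).

Definition anc p x y Nm n j : R :=
  if Nat.eqb j 0 then 0 else
  if Nat.ltb j (pk p n) then
    (if excluded_middle_informative (pt p n (S j) - pt p n j <= theta Nm n /\ cellP p x y n j (anch p x y n j))
     then anch p x y n j
     else pt p n j + Rmin (theta Nm n) (pt p n (S j) - pt p n j) / 2)
  else pt p n (pk p n) + theta Nm n / 2.

Definition lam p x y Nm n s : R := PL (anc p x y Nm n) (pt p n) (pk p n) s.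

Lemma anc_0 p x y Nm n : anc p x y Nm n 0 = 0.
Proof. reflexivity. Qed.

Lemma anc_mid p (V : valid_partition_seq p) x y Nm n j : (1 <= j)%nat -> (j < pk p n)%nat ->
  pt p n j < anc p x y Nm n j <= pt p n (S j) /\ anc p x y Nm n j - pt p n j <= theta Nm n.
Proof.
  intros H1 H2. unfold anc. destruct (Nat.eqb_spec j 0). lia.
  destruct (Nat.ltb_spec j (pk p n)); [|lia].
  assert (Hc : pt p n j < pt p n (S j)) by (apply grid_step; auto).
  pose proof (theta_pos Nm n).
  destruct excluded_middle_informative as [[Hs [Hc2 _]]|_]. lra.
  pose proof (Rmin_l (theta Nm n) (pt p n (S j) - pt p n j)).
  pose proof (Rmin_r (theta Nm n) (pt p n (S j) - pt p n j)).
  assert (0 < Rmin (theta Nm n) (pt p n (S j) - pt p n j)) by (apply Rmin_glb_lt; lra).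
  lra.
Qed.

Lemma anc_last p x y Nm n : (1 <= pk p n)%nat -> anc p x y Nm n (pk p n) = pt p n (pk p n) + theta Nm n / 2.
Proof.
  intros H. unfold anc. destruct (Nat.eqb_spec (pk p n) 0). lia.
  destruct (Nat.ltb_spec (pk p n) (pk p n)). lia. reflexivity.
Qed.

Lemma anc_offset p (V : valid_partition_seq p) x y Nm n j : (j <= pk p n)%nat ->
  0 <= anc p x y Nm n j - pt p n j <= theta Nm n.
Proof.
  intros Hj. pose proof (theta_pos Nm n). pose proof V as [H0 _].
  destruct (Nat.eq_dec j 0). subst. rewrite anc_0, H0. lra.
  destruct (Nat.eq_dec j (pk p n)). subst. rewrite anc_last by lia. lra.
  destruct (anc_mid p V x y Nm n j); lia || lra.
Qed.

Lemma anc_incr p (V : valid_partition_seq p) x y Nm n j : (j < pk p n)%nat ->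
  anc p x y Nm n j < anc p x y Nm n (S j).
Proof.
  intros Hj. pose proof (theta_pos Nm n). pose proof V as [H0 _].
  assert (Hle : pt p n j <= anc p x y Nm n j <= pt p n (S j)).
  { destruct (Nat.eq_dec j 0). subst. rewrite anc_0, H0. split. lra.
    apply grid_nonneg; auto. destruct (anc_mid p V x y Nm n j); lia || lra. }
  assert (Hst : pt p n j < pt p n (S j)) by (apply grid_step; auto).
  destruct (Nat.eq_dec (S j) (pk p n)) as [E|E].
  - rewrite E, anc_last by lia. rewrite <- E. destruct (Nat.eq_dec j 0). subst. rewrite anc_0.
    pose proof (grid_nonneg p V n 1 ltac:(lia)). lra. lra.
  - destruct (anc_mid p V x y Nm n (S j)); try lia. destruct (Nat.eq_dec j 0). subst. rewrite anc_0.
    rewrite H0 in Hst. lra. lra.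
Qed.

Lemma sumn_nonneg F m : (forall j, (j < m)%nat -> 0 <= F j) -> 0 <= sumn F m.
Proof. intros H. rewrite <- (sumn_zero (fun _ => 0) m) by auto. apply sumn_le. auto. Qed.

Lemma lam_tc p (V : valid_partition_seq p) x y Nm n : time_change (lam p x y Nm n).
Proof.
  pose proof V as [H0 _].
  assert (Ha : forall j, (j < pk p n)%nat -> anc p x y Nm n j < anc p x y Nm n (S j)) by (intros; apply anc_incr; auto).
  assert (Ht : forall j, (j < pk p n)%nat -> pt p n j < pt p n (S j)) by (intros; apply grid_step; auto).
  unfold lam. split; [|split; [|split]].
  - pose proof (PL_at (anc p x y Nm n) (pt p n) (pk p n) 0 Ha ltac:(lia)). rewrite anc_0 in H. lra.
  - intros s t Hs Hst. apply PL_strict; auto; rewrite anc_0; lra.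
  - intros t _. eapply lip_cont; [|apply PL_lip; auto].
    assert (0 <= sumn (fun j => (pt p n (S j) - pt p n j) / (anc p x y Nm n (S j) - anc p x y Nm n j)) (pk p n)).
    { apply sumn_nonneg. intros j Hj. left. apply Rdiv_lt_0_compat. specialize (Ht j Hj); lra. specialize (Ha j Hj); lra. }
    lra.
  - intros M. set (A := anc p x y Nm n (pk p n)).
    pose proof (anc_offset p V x y Nm n (pk p n) ltac:(lia)). fold A in H.
    pose proof (grid_nonneg p V n (pk p n) ltac:(lia)).
    exists (Rmax A (M - pt p n (pk p n) + A + 1)). split. eapply Rle_trans; [|apply Rmax_l]. lra.
    rewrite PL_tail; auto. 2: apply Rmax_l. fold A. rewrite H0.
    pose proof (Rmax_r A (M - pt p n (pk p n) + A + 1)). lra.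
Qed.

Lemma lam_offset p (V : valid_partition_seq p) x y Nm n s : 0 <= s ->
  Rabs (lam p x y Nm n s - s) <= theta Nm n.
Proof.
  intros Hs. pose proof V as [H0 _]. pose proof (theta_pos Nm n).
  assert (Ha : forall j, (j < pk p n)%nat -> anc p x y Nm n j < anc p x y Nm n (S j)) by (intros; apply anc_incr; auto).
  assert (Ht : forall j, (j < pk p n)%nat -> pt p n j < pt p n (S j)) by (intros; apply grid_step; auto).
  unfold lam. apply abs_intro.
  destruct (PL_loc (anc p x y Nm n) (pk p n) s Ha) as [[i [Hi Hi2]]|Hk]. rewrite anc_0; auto.
  - rewrite (PL_piece _ _ _ i); auto. rewrite H0.
    pose proof (anc_offset p V x y Nm n i ltac:(lia)). pose proof (anc_offset p V x y Nm n (S i) ltac:(lia)).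
    specialize (Ha i Hi). specialize (Ht i Hi).
    set (A := anc p x y Nm n i) in *. set (A' := anc p x y Nm n (S i)) in *.
    set (P := pt p n i) in *. set (P' := pt p n (S i)) in *.
    set (al := (s - A) / (A' - A)).
    assert (Hal : 0 <= al <= 1).
    { unfold al. split. apply Rmult_le_pos. lra. left; apply Rinv_0_lt_compat; lra.
      apply Rmult_le_reg_r with (A' - A). lra. unfold Rdiv. rewrite Rmult_assoc, Rinv_l by lra. lra. }
    assert (E1 : (P' - P) / (A' - A) * (s - A) = (P' - P) * al) by (unfold al; field; lra).
    assert (E2 : s = A + al * (A' - A)) by (unfold al; field; lra).
    rewrite E1. replace (P - 0 + (P' - P) * al - s) with ((1 - al) * (P - A) + al * (P' - A')) by (rewrite E2; ring).
    nra.
  - rewrite PL_tail; auto. rewrite H0. pose proof (anc_offset p V x y Nm n (pk p n) ltac:(lia)). lra.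
Qed.
Lemma Jp_anti x y e e' t : Jp x y e t -> e' <= e -> Jp x y e' t.
Proof. intros H He d Hd. destruct (H d Hd) as [v [Hv Hor]]. exists v; split; auto; lra. Qed.

Lemma pow2_ge n : INR n + 1 <= 2 ^ n.
Proof. induction n. simpl; lra. rewrite S_INR. simpl. pose proof (pos_INR n). lra. Qed.

Lemma pow2_inv_mono k k' : (k <= k')%nat -> / 2 ^ k' <= / 2 ^ k.
Proof.
  intros H. apply Rinv_le_contravar. apply pow_lt; lra. apply Rle_pow; lra || auto.
Qed.

Lemma exists_k eta : 0 < eta -> exists k, / 2 ^ k <= eta.
Proof.
  intros He. destruct (archimed_cor1 eta He) as [N [HN HN0]]. exists N.
  assert (0 < INR N) by (apply lt_0_INR; lia). pose proof (pow2_ge N).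
  left. eapply Rle_lt_trans; [|apply HN]. apply Rinv_le_contravar; lra.
Qed.

Lemma isolation x y t0 k : cadlag x -> cadlag y -> 0 < t0 ->
  exists d, 0 < d /\ forall c, Rabs (c - t0) < d -> c <> t0 -> ~ Jk x y k c.
Proof.
  intros [Xr Xl] [Yr Yl] Ht. set (e := / 2 ^ k / 2).
  assert (He : 0 < e) by (unfold e; apply Rdiv_lt_0_compat; [apply Rinv_0_lt_compat, pow_lt|]; lra).
  destruct (Xr t0 ltac:(lra) e He) as [d1 [Hd1 H1]].
  destruct (Yr t0 ltac:(lra) e He) as [d2 [Hd2 H2]].
  destruct (Xl t0 Ht) as [lx Hlx]. destruct (Hlx e He) as [d3 [Hd3 H3]].
  destruct (Yl t0 Ht) as [ly Hly]. destruct (Hly e He) as [d4 [Hd4 H4]].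
  set (d := Rmin (Rmin d1 d2) (Rmin d3 d4)).
  assert (Hd : 0 < d) by (unfold d; repeat apply Rmin_glb_lt; auto).
  pose proof (Rmin_l (Rmin d1 d2) (Rmin d3 d4)). pose proof (Rmin_r (Rmin d1 d2) (Rmin d3 d4)).
  pose proof (Rmin_l d1 d2). pose proof (Rmin_r d1 d2). pose proof (Rmin_l d3 d4). pose proof (Rmin_r d3 d4).
  fold d in H, H0.
  exists d. split; auto. intros c Hc Hne HJ. apply abs_lt_iff in Hc. unfold Jk, Jp in HJ.
  assert (E2 : / 2 ^ k = 2 * e) by (unfold e; field; apply pow_nonzero; lra).
  destruct (Rlt_le_dec t0 c).
  - destruct (HJ (c - t0) ltac:(lra)) as [v [Hv Hor]].
    specialize (H1 v ltac:(lra)) as H1v. specialize (H1 c ltac:(lra)) as H1c.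
    specialize (H2 v ltac:(lra)) as H2v. specialize (H2 c ltac:(lra)) as H2c.
    assert (Rabs (x v - x c) < 2 * e).
    { replace (x v - x c) with ((x v - x t0) - (x c - x t0)) by ring.
      eapply Rle_lt_trans. apply Rabs_triang. rewrite Rabs_Ropp. lra. }
    assert (Rabs (y v - y c) < 2 * e).
    { replace (y v - y c) with ((y v - y t0) - (y c - y t0)) by ring.
      eapply Rle_lt_trans. apply Rabs_triang. rewrite Rabs_Ropp. lra. }
    lra.
  - assert (c < t0) by lra.
    destruct (HJ (c - (t0 - d)) ltac:(lra)) as [v [Hv Hor]].
    specialize (H3 v ltac:(lra)) as H3v. specialize (H3 c ltac:(lra)) as H3c.
    specialize (H4 v ltac:(lra)) as H4v. specialize (H4 c ltac:(lra)) as H4c.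
    assert (Rabs (x v - x c) < 2 * e).
    { replace (x v - x c) with ((x v - lx) - (x c - lx)) by ring.
      eapply Rle_lt_trans. apply Rabs_triang. rewrite Rabs_Ropp. lra. }
    assert (Rabs (y v - y c) < 2 * e).
    { replace (y v - y c) with ((y v - ly) - (y c - ly)) by ring.
      eapply Rle_lt_trans. apply Rabs_triang. rewrite Rabs_Ropp. lra. }
    lra.
Qed.

Lemma F2 p (V : valid_partition_seq p) x y Nm (HN : NmProp p Nm) t0 eta :
  cadlag x -> cadlag y -> 0 < t0 -> 0 < eta -> Jp x y eta t0 ->
  exists N, forall n, (N <= n)%nat -> exists j, (j < pk p n)%nat /\
    pt p n j < t0 <= pt p n (S j) /\ lam p x y Nm n t0 = pt p n j.
Proof.
  intros Cx Cy Ht He HJ.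
  destruct (exists_k eta He) as [ks Hks].
  assert (HJs : Jk x y ks t0) by (eapply Jp_anti; eauto).
  destruct (isolation x y t0 ks Cx Cy Ht) as [d [Hd Hiso]].
  destruct (grid_end p V t0) as [N1 HN1].
  pose proof V as [H0 [_ [_ [_ Hmesh]]]].
  destruct (Hmesh t0 ltac:(lra) (Rmin d t0)) as [N2 HN2]. apply Rmin_glb_lt; lra.
  destruct (theta_cells p Nm HN t0) as [N3 HN3].
  exists (max N1 (max N2 N3)). intros n Hn.
  destruct (grid_cell p V n t0 Ht) as [j [Hj Hcell]]. left; apply HN1; lia.
  exists j. split; auto. split; auto.
  assert (Hsz : pt p n (S j) - pt p n j < Rmin d t0) by (apply HN2; [lia|auto|lra]).
  pose proof (Rmin_l d t0). pose proof (Rmin_r d t0).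
  assert (Hj1 : (1 <= j)%nat).
  { destruct j. rewrite H0 in Hsz, Hcell. lra. lia. }
  assert (Hth : pt p n (S j) - pt p n j <= theta Nm n) by (apply HN3; [lia|auto|lra]).
  assert (Hex : exists c, cellP p x y n j c).
  { destruct (nat_least (fun k => exists c', pt p n j < c' <= pt p n (S j) /\ Jk x y k c') ks)
      as [km [[c' [Hc' HJc']] Hmin]].
    exists t0. split; auto.
    exists c'. split; auto. exists km. split; auto. intros k' c'' Hc'' HJ''. apply Hmin. eauto. }
  pose proof (epsilon_spec (inhabits 0) _ Hex) as Hsp. fold (anch p x y n j) in Hsp.
  assert (Hanch : anch p x y n j = t0).
  { destruct Hsp as [Hin [k [HJk Hmin]]].
    assert (k <= ks)%nat by (apply (Hmin ks t0); auto).
    assert (Jk x y ks (anch p x y n j)) by (eapply Jp_anti; [apply HJk| apply pow2_inv_mono; auto]).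
    apply NNPP. intros Hne. apply (Hiso (anch p x y n j)); auto. apply abs_intro_lt. lra. }
  assert (Hanc : anc p x y Nm n j = t0).
  { unfold anc. destruct (Nat.eqb_spec j 0). lia. destruct (Nat.ltb_spec j (pk p n)); [|lia].
    destruct excluded_middle_informative as [_|Hno]. auto. exfalso. apply Hno. split; auto. }
  unfold lam. rewrite <- Hanc. rewrite PL_at. rewrite H0. ring.
  intros; apply anc_incr; auto. lia.
Qed.
Lemma r_lemma p (V : valid_partition_seq p) x y Nm f g u (mu : nat -> R -> R) T e d :
  (forall n, time_change (mu n)) ->
  (forall e, 0 < e -> exists N, forall n, (N <= n)%nat -> forall s, 0 <= s -> Rabs (mu n s - s) <= e) ->
  (forall T, 0 <= T -> forall e, 0 < e -> exists N, forall n, (N <= n)%nat ->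
      forall s, 0 <= s <= T -> Rabs (qn p f g n (mu n s) - u s) <= e) ->
  0 <= T -> 0 < e -> 0 < d <= 1 ->
  exists N, forall n, (N <= n)%nat -> forall s, 0 <= s <= T -> exists r, 0 <= r /\
    mu n r = lam p x y Nm n s /\ Rabs (r - s) <= d / 2 /\
    Rabs (qn p f g n (lam p x y Nm n s) - u r) <= e.
Proof.
  intros Hmu Hid HU HT He Hd.
  destruct (HU (T + 2) ltac:(lra) e He) as [N1 HN1].
  destruct (Hid (d/4) ltac:(lra)) as [N2 HN2].
  destruct (theta_to0 Nm (d/4) ltac:(lra)) as [N3 HN3].
  exists (max N1 (max N2 N3)). intros n Hn s Hs.
  assert (Hz : 0 <= lam p x y Nm n s) by (apply tc_nonneg; [apply lam_tc; auto| lra]).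
  destruct (tc_surj (mu n) _ (Hmu n) Hz) as [r [Hr Hrz]].
  assert (H1 : Rabs (mu n r - r) <= d/4) by (apply HN2; [lia|auto]).
  assert (H2 : Rabs (lam p x y Nm n s - s) <= d/4).
  { eapply Rle_trans. apply lam_offset; auto; lra. apply HN3; lia. }
  rewrite Hrz in H1. apply abs_le_iff in H1. apply abs_le_iff in H2.
  exists r. split; auto. split; auto. split. apply abs_intro; lra.
  rewrite <- Hrz. apply HN1. lia. lra.
Qed.

Lemma Key p (V : valid_partition_seq p) x y Nm (HN : NmProp p Nm) f g u :
  cadlag x -> cadlag y -> cadlag f -> cadlag g ->
  (forall t, 0 < t -> ~ (LC f t /\ LC g t) -> exists eta, 0 < eta /\ Jp x y eta t) ->
  J1_converges (qn p f g) u ->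
  forall T, 0 <= T -> forall e, 0 < e -> exists N, forall n, (N <= n)%nat ->
    forall s, 0 <= s <= T -> Rabs (qn p f g n (lam p x y Nm n s) - u s) <= e.
Proof.
  intros Cx Cy Cf Cg HJx [Cu [mu [Hmu [Hid HU]]]] T HT e He.
  apply compact_unif; auto. intros c Hc.
  pose proof Cu as [Ur Ul].
  destruct (Ur c ltac:(lra) (e/8) ltac:(lra)) as [dr [Hdr Hr]].
  assert (Hcase : (exists d1, 0 < d1 /\ forall s, 0 <= s -> Rabs (s - c) < d1 -> Rabs (u s - u c) < 3 * e / 8)
     \/ (0 < c /\ exists l, l <> u c /\ exists dl, 0 < dl /\ (forall s, c - dl < s < c -> Rabs (u s - l) < e / 8)
         /\ (forall eps, 0 < eps -> exists d, 0 < d /\ forall s, c - d < s < c -> Rabs (u s - l) < eps))).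
  { destruct (Rlt_le_dec 0 c) as [Hc0|Hc0].
    - destruct (Ul c Hc0) as [l Hl]. destruct (Hl (e/8) ltac:(lra)) as [dl [Hdl Hl8]].
      destruct (Rle_dec (Rabs (l - u c)) (e/4)).
      + left. exists (Rmin dr dl). split. apply Rmin_glb_lt; auto.
        pose proof (Rmin_l dr dl). pose proof (Rmin_r dr dl).
        intros s Hs Hsc. apply abs_lt_iff in Hsc. destruct (Rle_dec c s).
        * specialize (Hr s ltac:(lra)). lra.
        * specialize (Hl8 s ltac:(lra)).
          replace (u s - u c) with ((u s - l) + (l - u c)) by ring.
          eapply Rle_lt_trans. apply Rabs_triang. lra.
      + right. split; auto. exists l. split. intros ->. rewrite Rminus_diag, Rabs_R0 in n. lra.
        exists dl. split; auto.
    - left. exists dr. split; auto. intros s Hs Hsc. apply abs_lt_iff in Hsc.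
      specialize (Hr s ltac:(lra)). lra. }
  destruct Hcase as [[d1 [Hd1 Hu1]]|[Hc0 [l [Hne [dl [Hdl [Hl8 Hl]]]]]]].
  - set (d' := Rmin d1 1).
    assert (Hd' : 0 < d' <= 1) by (unfold d'; split; [apply Rmin_glb_lt; lra| apply Rmin_r]).
    assert (Hdd : d' <= d1) by apply Rmin_l.
    destruct (r_lemma p V x y Nm f g u mu T (e/8) d' Hmu Hid HU HT ltac:(lra) Hd') as [N HNr].
    exists (d'/2). split. lra. exists N. intros n Hn s Hs Hsc.
    destruct (HNr n Hn s Hs) as [r [Hr0 [_ [Hrs Hq]]]].
    apply abs_le_iff in Hrs. apply abs_lt_iff in Hsc.
    assert (A1 : Rabs (u r - u c) < 3 * e / 8) by (apply Hu1; auto; apply abs_intro_lt; lra).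
    assert (A2 : Rabs (u s - u c) < 3 * e / 8) by (apply Hu1; [lra|apply abs_intro_lt; lra]).
    replace (qn p f g n (lam p x y Nm n s) - u s) with
      ((qn p f g n (lam p x y Nm n s) - u r) + (u r - u c) - (u s - u c)) by ring.
    eapply Rle_trans. apply Rabs_triang. rewrite Rabs_Ropp.
    eapply Rle_trans. apply Rplus_le_compat_r. apply Rabs_triang. lra.
  - destruct (F1 p V f g u mu c l Cf Cg Hmu Hid HU Hc0 Hl Hne) as [HnLC [N1 HN1]].
    destruct (HJx c Hc0 HnLC) as [eta [Heta HJ]].
    destruct (F2 p V x y Nm HN c eta Cx Cy Hc0 Heta HJ) as [N2 HN2].
    set (d1 := Rmin dr dl).
    assert (Hd1 : 0 < d1) by (apply Rmin_glb_lt; auto).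
    pose proof (Rmin_l dr dl). pose proof (Rmin_r dr dl). fold d1 in H, H0.
    set (d' := Rmin d1 1).
    assert (Hd' : 0 < d' <= 1) by (unfold d'; split; [apply Rmin_glb_lt; lra| apply Rmin_r]).
    pose proof (Rmin_l d1 1). fold d' in H1.
    destruct (r_lemma p V x y Nm f g u mu T (e/8) d' Hmu Hid HU HT ltac:(lra) Hd') as [N HNr].
    exists (d'/2). split. lra. exists (max N (max N1 N2)). intros n Hn s Hs Hsc.
    destruct (HNr n ltac:(lia) s Hs) as [r [Hr0 [Hmr [Hrs Hq]]]].
    destruct (HN1 n ltac:(lia)) as [j1 [Hj1 [Hc1 Hm1]]].
    destruct (HN2 n ltac:(lia)) as [j2 [Hj2 [Hc2 Hm2]]].
    assert (j1 = j2) by (apply (grid_cell_unique p V n c); auto). subst j2.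
    assert (Heq : mu n c = lam p x y Nm n c) by congruence.
    apply abs_le_iff in Hrs. apply abs_lt_iff in Hsc.
    assert (Hside : Rabs (u r - u s) < e / 4).
    { destruct (Rle_dec c s).
      - assert (lam p x y Nm n c <= lam p x y Nm n s) by (apply tc_le; [apply lam_tc; auto|lra|auto]).
        assert (c <= r) by (apply (tc_rev_le (mu n)); auto; lra).
        specialize (Hr r ltac:(lra)) as Hr1. specialize (Hr s ltac:(lra)) as Hr2.
        replace (u r - u s) with ((u r - u c) - (u s - u c)) by ring.
        eapply Rle_lt_trans. apply Rabs_triang. rewrite Rabs_Ropp. lra.
      - assert (lam p x y Nm n s < lam p x y Nm n c) by (apply (lam_tc p V x y Nm n); lra).
        assert (r < c) by (apply (tc_rev_lt (mu n)); auto; lra).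
        specialize (Hl8 r ltac:(lra)) as Hr1. specialize (Hl8 s ltac:(lra)) as Hr2.
        replace (u r - u s) with ((u r - l) - (u s - l)) by ring.
        eapply Rle_lt_trans. apply Rabs_triang. rewrite Rabs_Ropp. lra. }
    replace (qn p f g n (lam p x y Nm n s) - u s) with
      ((qn p f g n (lam p x y Nm n s) - u r) + (u r - u s)) by ring.
    eapply Rle_trans. apply Rabs_triang. lra.
Qed.
Lemma notLC_J x y t : ~ (LC x t /\ LC y t) -> exists eta, 0 < eta /\ Jp x y eta t.
Proof.
  intros H. apply NNPP; intros Hno.
  assert (Hsplit : forall (z : R -> R), (forall v, Rabs (z v - z t) <= Rabs (x v - x t) \/ Rabs (z v - z t) <= Rabs (y v - y t)) -> LC z t).
  { intros z Hz eps He. apply NNPP; intro Hno2. apply Hno. exists eps. split; auto.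
    intros d Hd. apply NNPP; intro Hno3. apply Hno2. exists d. split; auto.
    intros v Hv. apply Rnot_le_lt. intro Hle. apply Hno3. exists v. split; auto.
    destruct (Hz v); [left|right]; lra. }
  apply H. split; apply Hsplit; intros v; [left|right]; lra.
Qed.

Lemma LC_sum_or x y t : ~ (LC (fun s => x s + y s) t /\ LC (fun s => x s + y s) t) -> ~ (LC x t /\ LC y t).
Proof. intros H [H1 H2]. apply H. split; apply LC_plus; auto. Qed.

Lemma LC_xx x y t : ~ (LC x t /\ LC x t) -> ~ (LC x t /\ LC y t).
Proof. tauto. Qed.
Lemma LC_yy x y t : ~ (LC y t /\ LC y t) -> ~ (LC x t /\ LC y t).
Proof. tauto. Qed.

Lemma J1_from_lam p (V : valid_partition_seq p) x y Nm U M : cadlag M ->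
  (forall T, 0 <= T -> forall e, 0 < e -> exists N, forall n, (N <= n)%nat ->
    forall s, 0 <= s <= T -> Rabs (U n (lam p x y Nm n s) - M s) <= e) ->
  J1_converges U M.
Proof.
  intros CM H. split; auto. exists (lam p x y Nm). split; [|split]; auto.
  - intros n; apply lam_tc; auto.
  - intros e He. destruct (theta_to0 Nm e He) as [N HN]. exists N. intros n Hn s Hs.
    eapply Rle_trans. apply lam_offset; auto. auto.
Qed.

Lemma eq_by_eps a b : (forall e, 0 < e -> Rabs (a - b) <= e) -> a = b.
Proof.
  intros H. destruct (Req_dec a b); auto. exfalso.
  assert (0 < Rabs (a - b)) by (apply Rabs_pos_lt; lra).
  specialize (H (Rabs (a - b) / 2) ltac:(lra)). lra.
Qed.

Theorem proposition3p4 (p : partition_seq) (x y : R -> R) :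
  valid_partition_seq p ->
  in_Q p x -> in_Q p y ->
  ((exists L, J1_converges (qn p (fun t => x t + y t) (fun t => x t + y t)) L) <->
   (exists M, J1_converges (qn p x y) M)) /\
  (forall M, J1_converges (qn p x y) M ->
     in_Q p (fun t => x t + y t) /\
     forall Lxy Lx Ly,
       J1_converges (qn p (fun t => x t + y t) (fun t => x t + y t)) Lxy ->
       J1_converges (qn p x x) Lx ->
       J1_converges (qn p y y) Ly ->
       forall t, 0 <= t -> M t = (Lxy t - Lx t - Ly t) / 2).
Proof.
  intros V [Cx [La HLa]] [Cy [Lb HLb]].
  destruct (Nm_exists p V) as [Nm HN].
  assert (Cxy : cadlag (fun t => x t + y t)) by (apply cadlag_plus; auto).
  assert (KA : forall Lx, J1_converges (qn p x x) Lx -> forall T, 0 <= T -> forall e, 0 < e -> exists N, forall n, (N <= n)%nat ->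
    forall s, 0 <= s <= T -> Rabs (qn p x x n (lam p x y Nm n s) - Lx s) <= e).
  { intros Lx H. apply Key; auto. intros t Ht Hn. apply notLC_J. apply LC_xx; auto. }
  assert (KB : forall Ly, J1_converges (qn p y y) Ly -> forall T, 0 <= T -> forall e, 0 < e -> exists N, forall n, (N <= n)%nat ->
    forall s, 0 <= s <= T -> Rabs (qn p y y n (lam p x y Nm n s) - Ly s) <= e).
  { intros Ly H. apply Key; auto. intros t Ht Hn. apply notLC_J. apply LC_yy; auto. }
  assert (KS : forall L, J1_converges (qn p (fun t => x t + y t) (fun t => x t + y t)) L ->
    forall T, 0 <= T -> forall e, 0 < e -> exists N, forall n, (N <= n)%nat ->
    forall s, 0 <= s <= T -> Rabs (qn p (fun t => x t + y t) (fun t => x t + y t) n (lam p x y Nm n s) - L s) <= e).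
  { intros L H. apply Key; auto. intros t Ht Hn. apply notLC_J. apply LC_sum_or; auto. }
  assert (KM : forall M, J1_converges (qn p x y) M -> forall T, 0 <= T -> forall e, 0 < e -> exists N, forall n, (N <= n)%nat ->
    forall s, 0 <= s <= T -> Rabs (qn p x y n (lam p x y Nm n s) - M s) <= e).
  { intros M H. apply Key; auto. intros t Ht Hn. apply notLC_J. auto. }
  assert (BW : forall M, J1_converges (qn p x y) M ->
     J1_converges (qn p (fun t => x t + y t) (fun t => x t + y t)) (fun t => La t + (Lb t + 2 * M t))).
  { intros M HM. apply (J1_from_lam p V x y Nm).
    - apply cadlag_plus. apply HLa. apply cadlag_plus. apply HLb. apply cadlag_scal. apply HM.
    - intros T HT e He.
      destruct (KA La HLa T HT (e/4) ltac:(lra)) as [N1 H1].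
      destruct (KB Lb HLb T HT (e/4) ltac:(lra)) as [N2 H2].
      destruct (KM M HM T HT (e/4) ltac:(lra)) as [N3 H3].
      exists (max N1 (max N2 N3)). intros n Hn s Hs.
      specialize (H1 n ltac:(lia) s Hs). specialize (H2 n ltac:(lia) s Hs). specialize (H3 n ltac:(lia) s Hs).
      rewrite qn_identity.
      apply abs_le_iff in H1. apply abs_le_iff in H2. apply abs_le_iff in H3. apply abs_intro. lra. }
  split; [split|].
  - intros [L HL]. exists (fun t => /2 * L t + (-/2 * La t + -/2 * Lb t)).
    apply (J1_from_lam p V x y Nm).
    + apply cadlag_plus. apply cadlag_scal. apply HL. apply cadlag_plus; apply cadlag_scal. apply HLa. apply HLb.
    + intros T HT e He.
      destruct (KA La HLa T HT (e/2) ltac:(lra)) as [N1 H1].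
      destruct (KB Lb HLb T HT (e/2) ltac:(lra)) as [N2 H2].
      destruct (KS L HL T HT (e/2) ltac:(lra)) as [N3 H3].
      exists (max N1 (max N2 N3)). intros n Hn s Hs.
      specialize (H1 n ltac:(lia) s Hs). specialize (H2 n ltac:(lia) s Hs). specialize (H3 n ltac:(lia) s Hs).
      rewrite qn_identity in H3.
      apply abs_le_iff in H1. apply abs_le_iff in H2. apply abs_le_iff in H3. apply abs_intro. lra.
  - intros [M HM]. eexists. apply BW. eauto.
  - intros M HM. split.
    + split; auto. eexists; apply BW; eauto.
    + intros Lxy Lx Ly HLxy HLx HLy t Ht. apply eq_by_eps. intros e He.
      destruct (KA Lx HLx t Ht (e/4) ltac:(lra)) as [N1 H1].
      destruct (KB Ly HLy t Ht (e/4) ltac:(lra)) as [N2 H2].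
      destruct (KS Lxy HLxy t Ht (e/4) ltac:(lra)) as [N3 H3].
      destruct (KM M HM t Ht (e/4) ltac:(lra)) as [N4 H4].
      set (n := max (max N1 N2) (max N3 N4)).
      specialize (H1 n ltac:(lia) t ltac:(lra)). specialize (H2 n ltac:(lia) t ltac:(lra)).
      specialize (H3 n ltac:(lia) t ltac:(lra)). specialize (H4 n ltac:(lia) t ltac:(lra)).
      rewrite qn_identity in H3.
      apply abs_le_iff in H1. apply abs_le_iff in H2. apply abs_le_iff in H3. apply abs_le_iff in H4.
      apply abs_intro. lra.
Qed.
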